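(* Let $\mathcal D\subset\mathbb R^n$ be nonempty, compact and convex, let $f$ be differentiable and $\mu$-strongly convex with minimizer $\mathbf x^*$ over $\mathcal D$ and $f^*=f(\mathbf x^* )$, and let $c>0$, $0<p\le1$. Let $(\mathbf x_k,\bar{\mathbf s}_k)$ be generated by the averaged Frank–Wolfe method (defined in the context). If $f(\mathbf x_k)-f^*=O(k^{-q})$ for some $q>0$, then there is a constant $C>0$ such that $\|\bar{\mathbf s}_k-\mathbf x_k\|_2^2\le C\max\{k^{-(q/2+p-1)},\,k^{-2p}\}$.
   Context: $\mathrm{LMO}_{\mathcal D}(x)\in\arg\min_{s\in\mathcal D}\nabla f(x)^Ts$. The averaged Frank–Wolfe method: given $\mathbf x_0\in\mathcal D$ and arbitrary $\bar{\mathbf s}_{-1}\in\mathcal D$, for $k=0,1,\dots$ set $\mathbf s_k=\mathrm{LMO}_{\mathcal D}(\mathbf x_k)$, $\bar{\mathbf s}_k=\bar{\mathbf s}_{k-1}+\beta_k(\mathbf s_k-\bar{\mathbf s}_{k-1})$, $\mathbf x_{k+1}=\mathbf x_k+\gamma_k(\bar{\mathbf s}_k-\mathbf x_k)$ with $\gamma_k=\frac{c}{c+k}$, $\beta_k=\left(\frac{c}{c+k}\right)^p$. *)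

(* Defs.v *)
From HB Require Import structures.
From mathcomp Require Import all_boot all_order all_algebra.
From mathcomp Require Import all_classical all_reals all_analysis.
Set Implicit Arguments. Unset Strict Implicit. Unset Printing Implicit Defensive.
Import Order.TTheory GRing.Theory Num.Theory.
Import numFieldNormedType.Exports.
Local Open Scope classical_set_scope.
Local Open Scope ring_scope.

(* Squared Euclidean norm ||v||_2^2 (the library norm on 'rV_n is the max norm). *)
Definition sqnorm2 {R : realType} {n : nat} (v : 'rV[R]_n) : R :=
  \sum_(i < n) v ord0 i ^+ 2.

Definition convex_set_rV {R : realType} {n : nat} (D : set 'rV[R]_n) : Prop :=
  forall x y t, D x -> D y -> 0 <= t <= 1 -> D (t *: x + (1 - t) *: y).

(* mu-strong convexity of a differentiable f (first-order characterization,
   grad f(x)^T v written as the differential 'd f x v). *)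
Definition strongly_convex {R : realType} {n : nat} (mu : R)
  (f : 'rV[R]_n -> R) : Prop :=
  forall x y, f y >= f x + 'd f x (y - x) + mu / 2 * sqnorm2 (y - x).

Definition gamma_k {R : realType} (c : R) (k : nat) : R := c / (c + k%:R).
Definition beta_k {R : realType} (c p : R) (k : nat) : R := (c / (c + k%:R)) `^ p.

(* (x, s, sbar) is a run of the averaged Frank-Wolfe method with initial
   point x 0 in D and arbitrary sbm1 (= \bar s_{-1}) in D.  s k is an output of
   the linear minimization oracle at x k. *)
Definition avg_FW {R : realType} {n : nat} (D : set 'rV[R]_n)
  (f : 'rV[R]_n -> R) (c p : R) (sbm1 : 'rV[R]_n)
  (x s sbar : nat -> 'rV[R]_n) : Prop :=
  D (x 0%N) /\ D sbm1 /\
  (forall k, D (s k) /\ forall y, D y -> 'd f (x k) (s k) <= 'd f (x k) y) /\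
  sbar 0%N = sbm1 + beta_k c p 0 *: (s 0%N - sbm1) /\
  (forall k, sbar k.+1 = sbar k + beta_k c p k.+1 *: (s k.+1 - sbar k)) /\
  (forall k, x k.+1 = x k + gamma_k c k *: (sbar k - x k)).

(* Main.v *)
Require Import Defs.
From HB Require Import structures.
From mathcomp Require Import all_boot all_order all_algebra.
From mathcomp Require Import all_classical all_reals all_analysis.
Import Order.TTheory GRing.Theory Num.Theory.
Import numFieldNormedType.Exports.
Local Open Scope classical_set_scope.
Local Open Scope ring_scope.
From mathcomp Require Import ring lra.
Section V.
Context {R : realType} {n : nat}.
Implicit Types (v w z : 'rV[R]_n).
Definition ip v w : R := \sum_(i < n) v ord0 i * w ord0 i.
Lemma sqnorm2E v : sqnorm2 v = ip v v.
Proof. by apply: eq_bigr => i _; rewrite expr2. Qed.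
Lemma sqnorm2_ge0 v : 0 <= sqnorm2 v.
Proof. by apply: sumr_ge0 => i _; rewrite sqr_ge0. Qed.
Lemma ipDl v w z : ip (v + w) z = ip v z + ip w z.
Proof. by rewrite /ip -big_split; apply: eq_bigr => i _; rewrite mxE mulrDl. Qed.
Lemma ipNl v z : ip (- v) z = - ip v z.
Proof. by rewrite /ip -sumrN; apply: eq_bigr => i _; rewrite mxE mulNr. Qed.
Lemma ipBl v w z : ip (v - w) z = ip v z - ip w z.
Proof. by rewrite ipDl ipNl. Qed.
Lemma ipZl a v z : ip (a *: v) z = a * ip v z.
Proof. by rewrite /ip mulr_sumr; apply: eq_bigr => i _; rewrite mxE mulrA. Qed.
Lemma ip_amgm e v w : 0 < e -> ip v w <= (e * sqnorm2 v + sqnorm2 w / e) / 2.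
Proof.
move=> e0; rewrite /ip /sqnorm2 mulr_sumr mulr_suml -big_split /= mulr_suml.
apply: ler_sum => i _.
set a := v ord0 i; set b := w ord0 i.
have h : (e * a ^+ 2 + b ^+ 2 / e) / 2 - a * b = (e * a - b) ^+ 2 / (2 * e).
  by field; rewrite gt_eqF.
rewrite -subr_ge0 h; apply: divr_ge0; first exact: sqr_ge0.
by rewrite mulr_ge0 // ltW.
Qed.
Lemma ip_amgmN e v w : 0 < e -> - ((e * sqnorm2 v + sqnorm2 w / e) / 2) <= ip v w.
Proof.
move=> e0; rewrite lerNl -ipNl.
have -> : sqnorm2 v = sqnorm2 (- v) by apply: eq_bigr => i _; rewrite mxE sqrrN.
exact: ip_amgm.
Qed.
Lemma sqnorm2D v w : sqnorm2 (v + w) <= 2 * sqnorm2 v + 2 * sqnorm2 w.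
Proof.
rewrite /sqnorm2 !mulr_sumr -big_split; apply: ler_sum => i _; rewrite mxE.
set a := v ord0 i; set b := w ord0 i.
rewrite -subr_ge0.
have -> : 2 * a ^+ 2 + 2 * b ^+ 2 - (a + b) ^+ 2 = (a - b) ^+ 2 by ring.
exact: sqr_ge0.
Qed.
Lemma sqnorm2Z a v : sqnorm2 (a *: v) = a ^+ 2 * sqnorm2 v.
Proof. by rewrite /sqnorm2 mulr_sumr; apply: eq_bigr => i _; rewrite mxE exprMn. Qed.
Lemma sqnorm2N v : sqnorm2 (- v) = sqnorm2 v.
Proof. by apply: eq_bigr => i _; rewrite mxE sqrrN. Qed.
Lemma sqnorm2_bnd M v w : (forall i, `|v ord0 i| <= M) -> (forall i, `|w ord0 i| <= M) ->
  sqnorm2 (v - w) <= n%:R * (2 * M) ^+ 2.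
Proof.
move=> hv hw; rewrite /sqnorm2.
have -> : n%:R * (2 * M) ^+ 2 = \sum_(i < n) (2 * M) ^+ 2 by rewrite sumr_const card_ord mulr_natl.
apply: ler_sum => i _; rewrite !mxE -real_normK ?num_real //.
have h : `|v ord0 i - w ord0 i| <= 2 * M.
  by rewrite mulr2n mulrDl mul1r (le_trans (ler_normB _ _)) // lerD.
rewrite lerXn2r ?nnegrE //.
exact: le_trans (normr_ge0 _) h.
Qed.
End V.
Lemma bnd (R : realType) n (D : set 'rV[R]_n) : compact D -> exists M : R, 0 <= M /\ forall y, D y -> forall i, `|y ord0 i| <= M.
Proof.
move=> /compact_bounded [M [_ HM]].
exists (Num.max 0 (M+1)); split; first by rewrite le_max lexx.
move=> y Dy i.
have := HM (Num.max 0 (M+1)).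
rewrite lt_max ltrDl ltr01 orbT => /(_ isT _ Dy) /=.
apply: le_trans.
rewrite [X in _ <= X]mx_normrE.
exact: (le_bigmax _ _ (ord0, i)).
Qed.
Lemma arith (R : realType) (A L P c W0 Q : R) (k : nat) :
  0 <= A -> 0 < L -> 0 < P -> (1 <= k)%N -> 0 < c -> 0 <= W0 -> 0 <= Q ->
  (forall m : nat, (1 <= m)%N -> (m <= k)%N -> m%:R ^+ 2 * L * P ^+ 2 <= A / 4 ->
     A * (m%:R * c / ((c + 2) * k%:R)) ^+ 2 <= 4 * W0 * Q) ->
  [\/ A <= 4 * L * P ^+ 2,
      A ^+ 2 <= 64 * L * (c + 2) ^+ 2 * W0 / c ^+ 2 * (P ^+ 2 * k%:R ^+ 2 * Q) |
      A <= 4 * W0 * (c + 2) ^+ 2 / c ^+ 2 * Q].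
Proof.
move=> A0 L0 P0 k1 c0 W00 Q0 H.
have kk : 1 <= k%:R :> R by rewrite ler1n.
have LP0 : 0 < 4 * L * P ^+ 2 by rewrite !mulr_gt0 // exprn_gt0.
set r := Num.sqrt (A / (4 * L * P ^+ 2)).
have r0 : 0 <= r by exact: sqrtr_ge0.
have r2 : r ^+ 2 = A / (4 * L * P ^+ 2) by rewrite sqr_sqrtr // divr_ge0 // ltW.
have hm : forall m : nat, m%:R <= r -> m%:R ^+ 2 * L * P ^+ 2 <= A / 4.
  move=> m mr.
  have : m%:R ^+ 2 <= r ^+ 2 by rewrite lerXn2r ?nnegrE.
  rewrite r2 ler_pdivlMr // => h.
  rewrite ler_pdivlMr //; lra.
have [r1|r1] := ltP r 1.
  constructor 1.
  have : r ^+ 2 < 1 by rewrite expr_lt1.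
  rewrite r2 ltr_pdivrMr // mul1r => h; exact: ltW.
have [t1 t2] := andP (truncn_itv r0).
set m0 := Num.truncn r in t1 t2.
have m01 : (1 <= m0)%N by rewrite truncn_gt0.
have [m0k|km0] := leqP m0 k.
  constructor 2.
  have := H m0 m01 m0k (hm _ t1).
  have hr : r <= 2 * m0%:R.
    apply: (le_trans (ltW t2)); rewrite -addn1 natrD; move: m01; rewrite -(ler_nat R); lra.
  have e1 : 0 < (c + 2) * k%:R by rewrite mulr_gt0 //; lra.
  set X := (c + 2) * k%:R in e1 *.
  move=> h.
  have h2 : A * (r * c / (2 * X)) ^+ 2 <= 4 * W0 * Q.
    apply: le_trans h; apply: ler_wpM2l => //.
    have cX : 0 < c / X by rewrite divr_gt0.
    have -> : r * c / (2 * X) = (r / 2) * (c / X) by field; rewrite gt_eqF.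
    have -> : m0%:R * c / X = m0%:R * (c / X) by rewrite mulrA.
    have r20 : 0 <= r / 2 by lra.
    rewrite lerXn2r ?nnegrE ?(mulr_ge0 r20 (ltW cX)) ?(mulr_ge0 (ler0n _ _) (ltW cX)) //.
    rewrite ler_pM2r //; lra.
  have P2 : 0 < P ^+ 2 by rewrite exprn_gt0.
  have X2 : 0 < X ^+ 2 by rewrite exprn_gt0.
  have c2 : 0 < c ^+ 2 by rewrite exprn_gt0.
  have e : A * (r * c / (2 * X)) ^+ 2 = A ^+ 2 * c ^+ 2 / (16 * L * P ^+ 2 * X ^+ 2).
    rewrite expr_div_n !exprMn r2; field.
    by rewrite !gt_eqF //; lra.
  have den : 0 < 16 * L * P ^+ 2 * X ^+ 2 by apply: mulr_gt0 => //; apply: mulr_gt0 => //; apply: mulr_gt0.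
  move: h2; rewrite e ler_pdivrMr // => h3.
  rewrite mulrAC ler_pdivlMr //.
  apply: (le_trans h3).
  rewrite /X le_eqVlt; apply/orP; left; apply/eqP; ring.
have e1 : 0 < c + 2 by lra.
constructor 3.
have kr : k%:R <= r by apply: le_trans t1; rewrite ler_nat ltnW.
have := H k k1 (leqnn _) (hm _ kr).
have k0 : 0 < k%:R :> R by lra.
have -> : k%:R * c / ((c + 2) * k%:R) = c / (c + 2) by field; rewrite !gt_eqF.
have c2 : 0 < (c / (c + 2)) ^+ 2 by rewrite exprn_gt0 // divr_gt0.
rewrite -ler_pdivlMr // => h.
apply: (le_trans h).
rewrite le_eqVlt; apply/orP; left; apply/eqP; field; rewrite !gt_eqF //.
Qed.
Section P.
Variable R : realType.
Lemma kpow_le (k : nat) (a b : R) : (1 <= k)%N -> a <= b -> k%:R `^ a <= k%:R `^ b.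
Proof. by move=> k1 ab; apply: ler_powR => //; rewrite ler1n. Qed.
Lemma powR_sq (x a : R) : 0 <= x -> (x `^ a) ^+ 2 = x `^ (a * 2).
Proof. by move=> x0; rewrite powRrM -powR_mulrn ?powR_ge0. Qed.
Lemma kinvp (k : nat) (p : R) : (1 <= k)%N -> (k%:R^-1) `^ p = k%:R `^ (- p).
Proof.
move=> k1; have k0 : 0 <= k%:R :> R by rewrite ler0n.
by rewrite -powR_inv1 // powRAC powR_inv1 ?powR_ge0 // powRN.
Qed.
Lemma negpow_anti (j k : nat) (q : R) : (1 <= k)%N -> (k <= j)%N -> 0 <= q ->
  j%:R `^ (- q) <= k%:R `^ (- q).
Proof.
move=> k1 kj q0; rewrite !powRN lef_pV2 ?posrE ?powR_gt0 ?ltr0n //; last by apply: leq_trans kj.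
by apply: ge0_ler_powR; rewrite ?nnegrE ?ler0n ?ler_nat.
Qed.
End P.

Lemma fin_ineq (R : realType) (G A Y : R) : 0 < G -> G * A / 2 <= ((2 / G) * Y + A / (2 / G)) / 2 -> A * G ^+ 2 <= 4 * Y.
Proof.
move=> G0.
have -> : ((2 / G) * Y + A / (2 / G)) / 2 = Y / G + A * G / 4 by field; rewrite gt_eqF.
move=> h.
have h2 : A * G / 4 <= Y / G by lra.
move: h2; rewrite ler_pdivlMr // => h3.
have -> : A * G ^+ 2 = 4 * (A * G / 4 * G) by field.
lra.
Qed.

Lemma beta01 (R : realType) (c p : R) k : 0 < c -> 0 < p -> 0 <= beta_k c p k <= 1.
Proof.
move=> c0 p0; rewrite /beta_k powR_ge0 /=.
have ck : 0 < c + k%:R by rewrite ltr_wpDr ?ler0n.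
have h1 : c / (c + k%:R) <= 1 by rewrite ler_pdivrMr // mul1r lerDl ler0n.
have h0 : 0 <= c / (c + k%:R) by rewrite divr_ge0 // ltW.
have := @ge0_ler_powR R p (ltW p0) _ 1 h0 ler01 h1.
by rewrite powR1.
Qed.

Lemma gamma01 (R : realType) (c : R) k : 0 < c -> 0 < gamma_k c k <= 1.
Proof.
move=> c0; have ck : 0 < c + k%:R by rewrite ltr_wpDr ?ler0n.
by rewrite /gamma_k divr_gt0 //= ler_pdivrMr // mul1r lerDl ler0n.
Qed.

Lemma conv_step (R : realType) n (D : set 'rV[R]_n) v w t :
  convex_set_rV D -> D v -> D w -> 0 <= t <= 1 -> D (v + t *: (w - v)).
Proof.
move=> cD Dv Dw t01.
have -> : v + t *: (w - v) = t *: w + (1 - t) *: v.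
  by apply/rowP => i; rewrite !mxE; ring.
exact: cD.
Qed.

Theorem corollary3 (R : realType) (n : nat) (D : set 'rV[R]_n)
  (f : 'rV[R]_n -> R) (mu : R) (xstar : 'rV[R]_n) (c p q : R)
  (sbm1 : 'rV[R]_n) (x s sbar : nat -> 'rV[R]_n) :
  D !=set0 -> compact D -> convex_set_rV D ->
  (forall z, differentiable f z) -> 0 < mu -> strongly_convex mu f ->
  D xstar -> (forall y, D y -> f xstar <= f y) ->
  0 < c -> 0 < p -> p <= 1 ->
  avg_FW D f c p sbm1 x s sbar ->
  0 < q ->
  (exists K : R, forall k : nat, (1 <= k)%N ->
      f (x k) - f xstar <= K * (k%:R `^ (- q))) ->
  exists C : R, 0 < C /\ forall k : nat, (1 <= k)%N ->
    sqnorm2 (sbar k - x k) <=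
      C * Num.max (k%:R `^ (- (q / 2 + p - 1))) (k%:R `^ (- (2 * p))).
Proof.
move=> _ cpD cvD _ mu0 scf Dxs xsmin c0 p0 p1 [Dx0 [Dsbm1 [Hs [Hsb0 [HsbS HxS]]]]] q0 [K HK].
have Dsb : forall k, D (sbar k).
  elim=> [|k IH]; first by rewrite Hsb0; apply: conv_step => //; [exact: (Hs 0%N).1|exact: beta01].
  by rewrite HsbS; apply: conv_step => //; [exact: (Hs k.+1).1|exact: beta01].
have Dx : forall k, D (x k).
  elim=> [|k IH] //; rewrite HxS; apply: conv_step => //.
  by have /andP[/ltW -> ->] := @gamma01 R c k c0.
have [M [M0 HM]] := @bnd R n D cpD.
set B := n%:R * (2 * M) ^+ 2.
have HB : forall v w, D v -> D w -> sqnorm2 (v - w) <= B.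
  by move=> v w Dv Dw; apply: (@sqnorm2_bnd R n M); apply: HM.
have B0 : 0 <= B by rewrite /B mulr_ge0 ?ler0n ?sqr_ge0.
have He : forall k, sqnorm2 (x k - xstar) <= 4 / mu * (f (x k) - f xstar).
  move=> k.
  set v := x k - xstar.
  set z := (1 / 2 : R) *: x k + (1 - 1 / 2) *: xstar.
  have Dz : D z by apply: cvD => //; lra.
  have e1 : x k - z = (1 / 2 : R) *: v.
    by apply/rowP => i; rewrite /z /v !mxE; field.
  have e2 : xstar - z = - ((1 / 2 : R) *: v) by apply/rowP => i; rewrite /z /v !mxE; field.
  have h1 := scf z (x k); have h2 := scf z xstar.
  rewrite e1 in h1; rewrite e2 raddfN sqnorm2N in h2.
  rewrite sqnorm2Z in h1 h2.
  have h3 := xsmin _ Dz.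
  set S := sqnorm2 v in h1 h2 *.
  set Lz := 'd f z ((1 / 2 : R) *: v) in h1 h2.
  have : mu * S <= 4 * (f (x k) - f xstar) by nra.
  move=> h; rewrite mulrAC ler_pdivlMr //; lra.
have HK' : forall k, (1 <= k)%N -> sqnorm2 (x k - xstar) <= 4 / mu * `|K| * k%:R `^ (- q).
  move=> k k1; apply: (le_trans (He k)); rewrite -[4 / mu * _ * _]mulrA; apply: ler_wpM2l.
    by rewrite divr_ge0 // ltW.
  by apply: (le_trans (HK k k1)); apply: ler_wpM2r; rewrite ?powR_ge0 ?ler_norm.
set W0 := 16 * `|K| / mu.
have W00 : 0 <= W0 by rewrite /W0 divr_ge0 ?mulr_ge0 // ltW.
set L := 2 * B * ((c `^ p) ^+ 2 + c ^+ 2) + 1.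
have L0 : 0 < L by rewrite /L ltr_pwDr // !mulr_ge0 // addr_ge0 // sqr_ge0.
set C1' := 64 * L * (c + 2) ^+ 2 * W0 / c ^+ 2.
set C3 := 4 * W0 * (c + 2) ^+ 2 / c ^+ 2.
set C1 := Num.sqrt C1' + C3.
set C2 := 4 * L.
have C1'0 : 0 <= C1' by rewrite /C1' !mulr_ge0 ?invr_ge0 ?sqr_ge0 ?(ltW L0) //; lra.
have C30 : 0 <= C3 by rewrite /C3 !mulr_ge0 ?invr_ge0 ?sqr_ge0 //; lra.
have C10 : 0 <= C1 by rewrite /C1 addr_ge0 // sqrtr_ge0.
have C20 : 0 <= C2 by rewrite /C2 mulr_ge0 // ltW.
exists (C1 + C2 + 1); split; first by rewrite ltr_pwDr // addr_ge0.
move=> k k1.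
have kR : 1 <= k%:R :> R by rewrite ler1n.
set P := k%:R `^ (- p).
set Q := k%:R `^ (- q).
set T := k%:R `^ (- (q / 2 + p - 1)).
set U := k%:R `^ (- (2 * p)).
have P0 : 0 < P by rewrite powR_gt0 // ltr0n.
have Q0 : 0 <= Q by rewrite powR_ge0.
set d := fun j => sbar j - x j.
set A := sqnorm2 (d k).
have A0 : 0 <= A by exact: sqnorm2_ge0.
have k0 : 0 < k%:R :> R by lra.
have kinvP : k%:R^-1 <= P.
  by rewrite -powR_inv1 ?ler0n //; apply: kpow_le => //; lra.
have gam_up : forall j, (k <= j)%N -> gamma_k c j <= c * P.
  move=> j kj; apply: (@le_trans _ _ (c / k%:R)); last by apply: ler_wpM2l => //; exact: ltW.
  apply: ler_wpM2l; first exact: ltW.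
  have jR : k%:R <= j%:R :> R by rewrite ler_nat.
  rewrite lef_pV2 ?posrE //; lra.
have gam_lo : forall j, (k <= j)%N -> (j <= 2 * k)%N -> c / ((c + 2) * k%:R) <= gamma_k c j.
  move=> j kj jk; apply: ler_wpM2l; first exact: ltW.
  have jR : j%:R <= 2 * k%:R :> R by rewrite -natrM ler_nat.
  have j0 : 0 <= j%:R :> R by rewrite ler0n.
  rewrite lef_pV2 ?posrE ?mulr_gt0 //; try lra.
  nra.
have bet_up : forall j, (k <= j)%N -> beta_k c p j.+1 <= c `^ p * P.
  move=> j kj; rewrite /beta_k /P -kinvp // -powRM ?invr_ge0 ?ler0n ?(ltW c0) //.
  have jR : k%:R <= j.+1%:R :> R by rewrite ler_nat ltnW.
  apply: ge0_ler_powR; rewrite ?nnegrE ?(ltW p0) ?divr_ge0 ?mulr_ge0 ?invr_ge0 ?ler0n ?(ltW c0) //; try lra.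
  apply: ler_wpM2l; first exact: ltW.
  rewrite lef_pV2 ?posrE //; lra.
have delta : forall j, (k <= j)%N -> sqnorm2 (d j.+1 - d j) <= L * P ^+ 2.
  move=> j kj.
  have -> : d j.+1 - d j = beta_k c p j.+1 *: (s j.+1 - sbar j) + - (gamma_k c j *: d j).
    by rewrite /d HsbS HxS; apply/rowP => i; rewrite !mxE; ring.
  apply: (le_trans (sqnorm2D _ _)); rewrite sqnorm2N !sqnorm2Z.
  have X1 := HB _ _ (Hs j.+1).1 (Dsb j).
  have X2 := HB _ _ (Dsb j) (Dx j).
  have X10 := sqnorm2_ge0 (s j.+1 - sbar j).
  have X20 := sqnorm2_ge0 (d j).
  have /andP[b0 _] := @beta01 R c p j.+1 c0 p0.
  have /andP[g0 _] := @gamma01 R c j c0.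
  have hb : beta_k c p j.+1 ^+ 2 <= (c `^ p * P) ^+ 2.
    by rewrite lerXn2r ?nnegrE ?bet_up // mulr_ge0 ?powR_ge0 // ltW.
  have hg : gamma_k c j ^+ 2 <= (c * P) ^+ 2.
    by rewrite lerXn2r ?nnegrE ?gam_up ?(ltW g0) // mulr_ge0 // ltW.
  have h1 : beta_k c p j.+1 ^+ 2 * sqnorm2 (s j.+1 - sbar j) <= (c `^ p * P) ^+ 2 * B.
    by apply: ler_pM => //; exact: sqr_ge0.
  have h2 : gamma_k c j ^+ 2 * sqnorm2 (d j) <= (c * P) ^+ 2 * B.
    by apply: ler_pM => //; exact: sqr_ge0.
  rewrite /L !exprMn in h1 h2 *.
  have : 0 <= P ^+ 2 by exact: sqr_ge0.
  nra.
have tele : forall m, ip (x (k + m)%N - x k) (d k) = \sum_(i < m) gamma_k c (k + i) * ip (d (k + i)%N) (d k).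
  elim=> [|m IH]; first by rewrite addn0 ipBl subrr big_ord0.
  rewrite big_ord_recr /= -IH addnS HxS.
  have -> : x (k + m)%N + gamma_k c (k + m) *: (sbar (k + m)%N - x (k + m)%N) - x k
      = (x (k + m)%N - x k) + gamma_k c (k + m) *: d (k + m)%N.
    by rewrite /d; apply/rowP => i; rewrite !mxE; ring.
  by rewrite ipDl ipZl.
have lower : forall m, (1 <= m)%N -> forall i, (i <= m)%N ->
    A - i%:R * (A / (4 * m%:R) + m%:R * (L * P ^+ 2)) <= ip (d (k + i)%N) (d k).
  move=> m m1; set Y := A / (4 * m%:R) + m%:R * (L * P ^+ 2).
  have m0 : 0 < m%:R :> R by rewrite ltr0n.
  elim=> [|i IH] im; first by rewrite addn0 mul0r subr0 /A sqnorm2E.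
  move: IH => /(_ (ltnW im)) IH.
  set del := d (k + i).+1 - d (k + i)%N.
  have -> : d (k + i.+1)%N = d (k + i)%N + del by rewrite /del addnS addrC subrK.
  rewrite ipDl.
  have h := @ip_amgmN R n (2 * m%:R) del (d k) (mulr_gt0 (ltr0n _ 2) m0).
  have hd := delta (k + i)%N (leq_addr _ _).
  have e : (2 * m%:R * sqnorm2 del + sqnorm2 (d k) / (2 * m%:R)) / 2
      = m%:R * sqnorm2 del + A / (4 * m%:R) by rewrite /A; field; rewrite gt_eqF.
  rewrite e in h.
  have hm : m%:R * sqnorm2 del <= m%:R * (L * P ^+ 2) by rewrite ler_wpM2l // ltW.
  rewrite -addn1 natrD mulrDl mul1r.
  have eY : Y = A / (4 * m%:R) + m%:R * (L * P ^+ 2) by [].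
  lra.
have core : forall m : nat, (1 <= m)%N -> (m <= k)%N -> m%:R ^+ 2 * L * P ^+ 2 <= A / 4 ->
    A * (m%:R * c / ((c + 2) * k%:R)) ^+ 2 <= 4 * W0 * Q.
  move=> m m1 mk hmA.
  have m0 : 0 < m%:R :> R by rewrite ltr0n.
  have c2k : 0 < (c + 2) * k%:R by rewrite mulr_gt0 //; lra.
  set g := c / ((c + 2) * k%:R).
  have g0 : 0 < g by rewrite divr_gt0.
  set G := m%:R * c / ((c + 2) * k%:R).
  have G0 : 0 < G by rewrite /G !mulr_gt0 ?invr_gt0.
  have eG : G = m%:R * g by rewrite /G /g mulrA.
  rewrite -mulrA; apply: fin_ineq => //.
  have lowsum : G * A / 2 <= \sum_(i < m) gamma_k c (k + i) * ip (d (k + i)%N) (d k).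
    have -> : G * A / 2 = \sum_(i < m) (g * (A / 2)).
      by rewrite sumr_const card_ord -mulr_natl eG; field.
    apply: ler_sum => i _.
    have im : (i <= m)%N := ltnW (ltn_ord i).
    set Y := A / (4 * m%:R) + m%:R * (L * P ^+ 2).
    have hl : A - i%:R * Y <= ip (d (k + i)%N) (d k) := lower m m1 i im.
    have Y0 : 0 <= Y := addr_ge0 (divr_ge0 A0 (ltW (mulr_gt0 (ltr0n _ 4) m0))) (mulr_ge0 (ltW m0) (mulr_ge0 (ltW L0) (sqr_ge0 _))).
    have iY : i%:R * Y <= m%:R * Y by rewrite ler_wpM2r // ler_nat.
    have mY : m%:R * Y = A / 4 + m%:R ^+ 2 * L * P ^+ 2 by rewrite /Y; field; rewrite gt_eqF.
    have hip : A / 2 <= ip (d (k + i)%N) (d k).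
      lra.
    apply: ler_pM => //; first exact: ltW.
      by rewrite divr_ge0.
    apply: gam_lo; first exact: leq_addr.
    by rewrite mul2n -addnn leq_add2l (leq_trans im mk).
  rewrite -tele in lowsum.
  have up := @ip_amgm R n (2 / G) (x (k + m)%N - x k) (d k) (divr_gt0 (ltr0n _ 2) G0).
  have W : sqnorm2 (x (k + m)%N - x k) <= W0 * Q.
    have -> : x (k + m)%N - x k = (x (k + m)%N - xstar) + - (x k - xstar).
      by rewrite opprB addrA subrK.
    apply: (le_trans (sqnorm2D _ _)); rewrite sqnorm2N.
    have km1 : (1 <= k + m)%N by apply: leq_trans k1 (leq_addr _ _).
    have h1 := HK' (k + m)%N km1.
    have h2 := HK' k k1.
    have h3 := @negpow_anti R (k + m)%N k q k1 (leq_addr _ _) (ltW q0).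
    set al := 4 / mu * `|K| in h1 h2.
    have al0 : 0 <= al by rewrite /al mulr_ge0 ?divr_ge0 // ltW.
    have h4 : al * (k + m)%N%:R `^ (- q) <= al * Q by rewrite ler_wpM2l.
    have eW : W0 = 4 * al by rewrite /W0 /al; field; rewrite gt_eqF.
    rewrite eW -/Q in h2 *.
    lra.
  have h5 : (2 / G) * sqnorm2 (x (k + m)%N - x k) <= (2 / G) * (W0 * Q).
    by rewrite ler_wpM2l // divr_ge0 // ltW.
  have eA : sqnorm2 (d k) = A by [].
  rewrite eA in up; lra.
have kn0 : k%:R != 0 :> R by rewrite gt_eqF.
have hU : P ^+ 2 = U.
  by rewrite /P powR_sq ?ler0n // /U; congr (_ `^ _); ring.
have hT : P ^+ 2 * k%:R ^+ 2 * Q = T ^+ 2.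
  rewrite /T powR_sq ?ler0n //.
  have -> : - (q / 2 + p - 1) * 2 = - p * 2 + 2 + - q by field.
  rewrite powRD ?kn0 ?implybT // powRD ?kn0 ?implybT //.
  rewrite -powR_sq ?ler0n // (@powR_mulrn R _ 2) ?ler0n //.
have hQT : Q <= T by apply: kpow_le => //; lra.
have T0 : 0 <= T by exact: powR_ge0.
have U0 : 0 <= U by exact: powR_ge0.
set Mx := Num.max T U.
have TM : T <= Mx by rewrite le_max lexx.
have UM : U <= Mx by rewrite le_max lexx orbT.
have Mx0 : 0 <= Mx by apply: le_trans TM.
have fin : A <= C1 * T \/ A <= C2 * U.
  have [h|h|h] := @arith R A L P c W0 Q k A0 L0 P0 k1 c0 W00 Q0 core.
  - by right; rewrite hU in h; rewrite /C2.
  - left; rewrite hT in h.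
    have h' : A ^+ 2 <= (Num.sqrt C1' * T) ^+ 2 by rewrite exprMn sqr_sqrtr.
    have hs : 0 <= Num.sqrt C1' * T by rewrite mulr_ge0 ?sqrtr_ge0.
    have h'' : A <= Num.sqrt C1' * T by nra.
    apply: (le_trans h''); rewrite /C1 mulrDl lerDl mulr_ge0 //.
  - left; have hC3 : A <= C3 * Q by [].
    have H1 : C3 * Q <= C3 * T by rewrite ler_wpM2l.
    have H2 : 0 <= Num.sqrt C1' * T by rewrite mulr_ge0 ?sqrtr_ge0.
    have eC : C1 * T = Num.sqrt C1' * T + C3 * T by rewrite /C1 mulrDl.
    lra.
have h1 : C1 * T <= C1 * Mx by rewrite ler_wpM2l.
have h2 : C2 * U <= C2 * Mx by rewrite ler_wpM2l.
have -> : (C1 + C2 + 1) * Mx = C1 * Mx + C2 * Mx + Mx by ring.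
have h3 : 0 <= C1 * Mx by rewrite mulr_ge0.
have h4 : 0 <= C2 * Mx by rewrite mulr_ge0.
case: fin => h; lra.
Qed.
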